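(* Let $s>1$, $\eta(s)=\sum_{k=1}^\infty\frac{1}{(k+1)\ln^s(k+1)}$, let $a_k=\frac{1}{\eta(s)}\cdot\frac{1}{(k+1)\ln^s(k+1)}$ ($k\in\mathbb{N}$), and let $K$ be the associated generalized Cantor set. Then there exist constants $c_1,c_2,b,t_0>0$ with $\ln\ln(b/t)>0$ for $0<t\le t_0$, such that $$c_1(\ln\ln(b/t))^{1-s}\le |K(t)|\le c_2(\ln\ln(b/t))^{1-s}\quad\text{for all } t\in(0,t_0].$$
   Context: Generalized Cantor set for positive $(a_k)$ with $\sum a_k=1$: $K_0=[0,1]$; recursively $K_n$ is obtained from $K_{n-1}$ (a union of $2^{n-1}$ disjoint closed intervals) by removing from each of its intervals the open centered subinterval of length $a_n2^{-(n-1)}$; $K=\bigcap_n K_n$. For $t>0$, $K(t)=\{x\in\mathbb{R}:\operatorname{dist}(x,K)<t\}$ and $|\cdot|$ is Lebesgue measure. *)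

(* Defs.v *)
From HB Require Import structures.
From mathcomp Require Import all_boot all_order all_algebra.
From mathcomp Require Import all_classical all_reals all_analysis.
Set Implicit Arguments. Unset Strict Implicit. Unset Printing Implicit Defensive.
Import Order.TTheory GRing.Theory Num.Theory.
Local Open Scope classical_set_scope.
Local Open Scope ring_scope.

(* Closed intervals [l, r] are represented by pairs (l, r). *)
(* cantor_intervals a n = the list of the 2^n closed intervals composing K_n:
   K_0 = [0,1]; K_n is obtained from K_{n-1} by removing from each of its
   intervals [l, r] the open centered subinterval of length a_n 2^{-(n-1)}. *)
Fixpoint cantor_intervals (R : realType) (a : nat -> R) (n : nat)
  : seq (R * R) :=
  match n with
  | 0 => [:: (0, 1)]
  | m.+1 =>
      flatten [seq (let g := a m.+1 / 2 ^+ m in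
                    let c := (p.1 + p.2) / 2 in
                    [:: (p.1, c - g / 2); (c + g / 2, p.2)])
              | p <- cantor_intervals a m]
  end.

Definition cantor_step (R : realType) (a : nat -> R) (n : nat) : set R :=
  [set x | exists2 p, p \in cantor_intervals a n & p.1 <= x <= p.2].

Definition cantor_set (R : realType) (a : nat -> R) : set R :=
  \bigcap_n cantor_step a n.

(* K(t) = {x : dist(x, K) < t}, with dist(x,K) = inf_{y in K} |x - y|;
   dist(x,K) < t iff some y in K has |x - y| < t. *)
Definition nbhd_set (R : realType) (K : set R) (t : R) : set R :=
  [set x | exists2 y, K y & `|x - y| < t].

Definition eta_s (R : realType) (s : R) : R :=
  limn (fun n : nat =>
    \sum_(1 <= k < n) (1 / (k.+1%:R * (ln (k.+1%:R : R)) `^ s))).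

(* a_k = 1/eta(s) * 1/((k+1) ln^s(k+1)), for k >= 1 (a_0 is never used) *)
Definition a_seq (R : realType) (s : R) (k : nat) : R :=
  (1 / eta_s s) * (1 / (k.+1%:R * (ln (k.+1%:R : R)) `^ s)).

(* Main.v *)
Require Import Defs.
From HB Require Import structures.
From mathcomp Require Import all_boot all_order all_algebra.
From mathcomp Require Import all_classical all_reals all_analysis.
From mathcomp Require Import ring lra.
Import Order.TTheory GRing.Theory Num.Theory.
Import numFieldNormedType.Exports.
Local Open Scope classical_set_scope.
Local Open Scope ring_scope.

Section Analytic.
Variable R : realType.
Implicit Types x y z : R.

Lemma ln_le_sub1 z : 0 < z -> ln z <= z - 1.
Proof.
move=> z0; have := @le_ln1Dx R (z - 1).
have -> : 1 + (z - 1) = z by ring.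
apply; lra.
Qed.

Lemma lnB_bounds x y : 0 < x -> x <= y ->
  (y - x) / y <= ln y - ln x /\ ln y - ln x <= (y - x) / x.
Proof.
move=> x0 xy; have y0 : 0 < y by lra.
split.
- have := @ln_le_sub1 (x / y) (divr_gt0 x0 y0).
  rewrite ln_div ?posrE // => h.
  have -> : (y - x) / y = - (x / y - 1) by field; lra.
  lra.
- have := @ln_le_sub1 (y / x) (divr_gt0 y0 x0).
  rewrite ln_div ?posrE // => h.
  have -> : (y - x) / x = (y / x - 1) by field; lra.
  lra.
Qed.

Lemma expB_lb (a b : R) : expR a * (1 + (b - a)) <= expR b.
Proof.
have := expR_ge1Dx (b - a).
have -> : expR b = expR a * expR (b - a) by rewrite -expRD; congr expR; ring.
move=> h; rewrite ler_pM2l ?expR_gt0 //.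
Qed.

Lemma powR_pos (a q : R) : 0 < a -> a `^ q = expR (q * ln a).
Proof. by move=> a0; rewrite /powR gt_eqF. Qed.


Lemma div_le (a b c d : R) : 0 < b -> 0 < d -> a * d <= c * b -> a / b <= c / d.
Proof.
move=> b0 d0 h; rewrite ler_pdivrMr // mulrAC ler_pdivlMr //.
Qed.

Variable s : R.
Hypothesis hs : 1 < s.
Let p := s - 1.
Let p0 : 0 < p. Proof. by rewrite /p subr_gt0. Qed.

Definition phi x := ((ln x) `^ (s - 1))^-1.
Definition bb x := 1 / (x * (ln x) `^ s).
Definition Ck := 4 * expR ((s - 1) * ln 2).

Lemma key x : 2 <= x ->
  ((s - 1) * bb (x + 1) <= phi x - phi (x + 1)) /\
  (phi x - phi (x + 1) <= (s - 1) * Ck * bb (x + 1)).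
Proof.
move=> x2.
have x0 : 0 < x by lra.
have x10 : 0 < x + 1 by lra.
have u0 : 0 < ln x by apply: ln_gt0; lra.
have uv : ln x <= ln (x + 1) by rewrite ler_ln ?posrE //; lra.
have v0 : 0 < ln (x + 1) by lra.
set u := ln x in u0 uv *; set v := ln (x + 1) in uv v0 *.
have v2u : v <= 2 * u.
  have -> : 2 * u = ln (x * x) by rewrite lnM ?posrE // /u; ring.
  rewrite /v ler_ln ?posrE ?mulr_gt0 //; nra.
have [hba1 hba2] := lnB_bounds u v u0 uv.
have [hvu1 hvu2] := lnB_bounds x (x+1) x0 (ltW (ltr_pwDr ltr01 (lexx x))).
have e : x + 1 - x = 1 by ring. rewrite e in hvu1 hvu2.
set al := ln u in hba1 hba2 *; set be := ln v in hba1 hba2 *.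
set A := expR (p * al); set B := expR (p * be).
have A0 : 0 < A by apply: expR_gt0.
have B0 : 0 < B by apply: expR_gt0.
have phix : phi x = A^-1 by rewrite /phi powR_pos.
have phix1 : phi (x + 1) = B^-1 by rewrite /phi powR_pos.
have vs : v `^ s = B * v.
  rewrite powR_pos //; transitivity (expR (p * be) * expR be).
    by rewrite -expRD; congr expR; rewrite /p /be; ring.
  by rewrite /be lnK ?posrE.
have hBA := expB_lb (p * al) (p * be); rewrite -/A -/B in hBA.
have hAB := expB_lb (p * be) (p * al); rewrite -/A -/B in hAB.
have h1 : 1 <= (be - al) * v * (x + 1).
  have e1 : v - u <= (be - al) * v by rewrite -ler_pdivrMr.
  have e2 : 1 <= (v - u) * (x + 1) by rewrite -ler_pdivrMr.
  nra.
have h2 : (be - al) * u * x <= 1.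
  have e1 : (be - al) * u <= v - u by rewrite -ler_pdivlMr.
  have e2 : (v - u) * x <= 1 by rewrite -ler_pdivlMr // mul1r.
  nra.
have hab : 0 <= be - al.
  have : 0 <= (v - u) / v by apply: divr_ge0; lra.
  lra.
have beal : be <= ln 2 + al.
  rewrite /be /al -lnM ?posrE //; rewrite ler_ln ?posrE ?mulr_gt0 //.
have hB2 : B <= expR (p * ln 2) * A.
  by rewrite /A /B -expRD ler_expR -mulrDr ler_pM2l.
rewrite phix phix1 /bb vs.
have -> : A^-1 - B^-1 = (B - A) / (A * B) by field; apply/andP; split; lra.
split.
- rewrite mul1r; apply: div_le; first by rewrite !mulr_gt0.
    by rewrite mulr_gt0.
  have : p * A <= (B - A) * ((x + 1) * v).
    have k1 : A * p * (be - al) <= B - A by lra.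
    have k2 : 0 <= (x + 1) * v by rewrite mulr_ge0 //; lra.
    have k3 : 0 <= (B - A - A * p * (be - al)) * ((x + 1) * v) by rewrite mulr_ge0 //; lra.
    have k4 : 0 <= (A * p) * ((be - al) * v * (x + 1) - 1).
      apply: mulr_ge0; first by apply: mulr_ge0; apply: ltW.
      by rewrite subr_ge0.
    nra.
  move=> h.
  have -> : (s - 1) * (A * B) = (p * A) * B by rewrite /p; ring.
  have -> : (B - A) * ((x + 1) * (B * v)) = ((B - A) * ((x + 1) * v)) * B by ring.
  by rewrite ler_pM2r.
- rewrite mul1r; apply: div_le; first by rewrite !mulr_gt0.
    by rewrite !mulr_gt0.
  rewrite -/p /Ck.
  have hBA' : B - A <= B * p * (be - al) by lra.
  have k1 : (B - A) * ((x + 1) * v) <= B * p * ((be - al) * (x + 1) * v).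
    have : 0 <= (x + 1) * v by rewrite mulr_ge0 //; lra.
    nra.
  have k2 : (be - al) * (x + 1) * v <= 4.
    have m1 : (x + 1) * v <= (2 * x) * (2 * u) by apply: ler_pM; lra.
    have : (be - al) * ((x + 1) * v) <= (be - al) * ((2 * x) * (2 * u)).
      by apply: ler_wpM2l.
    nra.
  have k3 : B * p * ((be - al) * (x + 1) * v) <= B * p * 4.
    by rewrite ler_pM2l // mulr_gt0.
  have k4 : B * p * 4 <= expR (p * ln 2) * A * p * 4.
    rewrite ler_pM2r // ler_pM2r //.
  have -> : (B - A) * ((x + 1) * (B * v)) = ((B - A) * ((x + 1) * v)) * B by ring.
  have -> : p * (4 * expR (p * ln 2)) * (A * B) = (expR (p * ln 2) * A * p * 4) * B by ring.
  rewrite ler_pM2r //; lra.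
Qed.


Definition bk (k : nat) : R := bb k.+1%:R.
Definition PP (n : nat) : R := \sum_(1 <= k < n) bk k.

Lemma bk_ge0 k : 0 <= bk k.
Proof.
rewrite /bk /bb; apply: divr_ge0 => //; apply: mulr_ge0 => //; exact: powR_ge0.
Qed.

Lemma phi_ge0 x : 0 <= phi x.
Proof. by rewrite /phi invr_ge0 powR_ge0. Qed.

Lemma PP_homo : {homo PP : n m / (n <= m)%N >-> n <= m}.
Proof.
move=> n m nm; case: n nm => [|n] nm.
  by rewrite /PP big_geq // sumr_ge0 // => k _; apply: bk_ge0.
rewrite /PP (big_cat_nat (_ : (1 <= n.+1)%N) nm) //=.
by rewrite lerDl sumr_ge0 // => k _; apply: bk_ge0.
Qed.

Lemma PP_diff m N : (1 <= m)%N -> (m <= N)%N ->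
  PP N - PP m = \sum_(m <= k < N) bk k.
Proof.
move=> m1 mN; rewrite /PP (big_cat_nat m1 mN) /=; ring.
Qed.

Lemma key_nat k : (2 <= k)%N ->
  ((s - 1) * bk k <= phi k%:R - phi k.+1%:R) /\
  (phi k%:R - phi k.+1%:R <= (s - 1) * Ck * bk k).
Proof.
move=> k2; rewrite /bk -natr1; apply: key.
by rewrite (ler_nat R 2 k).
Qed.

Lemma tele m N : (m <= N)%N ->
  \sum_(m <= k < N) (phi k%:R - phi k.+1%:R) = phi m%:R - phi N%:R.
Proof.
move=> mN.
have := telescope_sumr (fun k => - phi k%:R) mN.
under eq_bigr do rewrite opprK addrC.
by move=> ->; ring.
Qed.

Lemma tail_ub m N : (1 <= m)%N -> PP N - PP m.+1 <= phi m.+1%:R / (s - 1).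
Proof.
move=> m1; rewrite ler_pdivlMr ?subr_gt0 //.
case: (leqP m.+1 N) => mN; last first.
  have : PP N <= PP m.+1 by apply: PP_homo; apply: ltnW.
  have := phi_ge0 m.+1%:R; have : 0 < s - 1 by rewrite subr_gt0.
  nra.
rewrite PP_diff // mulrC mulr_sumr.
apply: le_trans (_ : \sum_(m.+1 <= k < N) (phi k%:R - phi k.+1%:R) <= _).
  rewrite big_nat [X in _ <= X]big_nat; apply: ler_sum => k /andP[mk _].
  by case: (key_nat k (leq_ltn_trans m1 mk)).
rewrite tele // lerBlDr lerDl; exact: phi_ge0.
Qed.

Lemma tail_lb m N : (1 <= m)%N -> (m.+1 <= N)%N ->
  phi m.+1%:R - phi N%:R <= (s - 1) * Ck * (PP N - PP m.+1).
Proof.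
move=> m1 mN; rewrite PP_diff // mulr_sumr -tele //.
rewrite big_nat [X in _ <= X]big_nat; apply: ler_sum => k /andP[mk _].
by case: (key_nat k (leq_ltn_trans m1 mk)).
Qed.

Lemma PP_bounded : has_ubound (range PP).
Proof.
exists (PP 2 + phi 2%:R / (s - 1)) => _ [N _ <-].
by rewrite -lerBlDl tail_ub.
Qed.

Lemma PP_cvg : cvgn PP.
Proof. apply/cvg_ex; exists (sup (range PP)); exact: (nondecreasing_cvgn PP_homo PP_bounded). Qed.

Lemma PP_le_eta n : PP n <= eta_s s.
Proof. exact: (nondecreasing_cvgn_le PP_homo PP_cvg). Qed.

Lemma eta_tail_ub m : (1 <= m)%N -> eta_s s - PP m.+1 <= phi m.+1%:R / (s - 1).
Proof.
move=> m1; rewrite lerBlDl.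
apply: limr_le; first exact: PP_cvg.
by apply: nearW => N; rewrite -lerBlDl tail_ub.
Qed.


Definition kap := (1 - (2 `^ (s - 1))^-1) / ((s - 1) * Ck).

Lemma two_pow_gt1 : 1 < 2 `^ (s - 1) :> R.
Proof.
rewrite powR_pos // expR_gt1 mulr_gt0 // ?subr_gt0 //; apply: ln_gt0; lra.
Qed.

Lemma Ck_gt0 : 0 < Ck.
Proof. by rewrite /Ck mulr_gt0 // expR_gt0. Qed.

Lemma kap_gt0 : 0 < kap.
Proof.
rewrite /kap divr_gt0 ?mulr_gt0 ?subr_gt0 ?Ck_gt0 //.
have h := two_pow_gt1; rewrite invf_lt1 //; try lra. all: try exact: expR_gt0.
Qed.

Lemma phi_sq m : phi (m.+1 ^ 2)%:R = (2 `^ (s - 1))^-1 * phi m.+1%:R.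
Proof.
rewrite /phi natrX lnXn // -[ln _ *+ 2]mulr_natr powRM //; last first.
  by apply: ln_ge0; rewrite (ler_nat R 1).
by rewrite invfM mulrC.
Qed.

Lemma eta_tail_lb m : (1 <= m)%N -> kap * phi m.+1%:R <= eta_s s - PP m.+1.
Proof.
move=> m1.
have mN : (m.+1 <= m.+1 ^ 2)%N by rewrite expnS expn1 leq_pmulr.
have h := tail_lb m (m.+1 ^ 2) m1 mN.
rewrite phi_sq in h.
have h2 : PP (m.+1 ^ 2) <= eta_s s by apply: PP_le_eta.
have sc : 0 < (s - 1) * Ck by rewrite mulr_gt0 ?subr_gt0 ?Ck_gt0.
rewrite /kap mulrAC ler_pdivrMr //.
apply: le_trans (_ : (s - 1) * Ck * (PP (m.+1 ^ 2) - PP m.+1) <= _).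
  by apply: le_trans h; rewrite mulrBl mul1r.
rewrite mulrC ler_pM2r //; lra.
Qed.

End Analytic.

Set Implicit Arguments. Unset Strict Implicit.

Section Cantor.
Variable R : realType.
Variable a : nat -> R.

Local Notation I := (cantor_intervals a).

Definition child (n : nat) (p : R * R) : seq (R * R) :=
  let g := a n.+1 / 2 ^+ n in
  let c := (p.1 + p.2) / 2 in
  [:: (p.1, c - g / 2); (c + g / 2, p.2)].

Lemma I_S n : I n.+1 = flatten [seq child n p | p <- I n].
Proof. by []. Qed.

Lemma mem_IS n q : q \in I n.+1 -> exists2 p, p \in I n & q \in child n p.
Proof. by rewrite I_S => /flatten_mapP. Qed.

Lemma size_I n : size (I n) = (2 ^ n)%N.
Proof.
elim: n => [//|n IH]; rewrite I_S.
have -> : forall l : seq (R * R), size (flatten [seq child n p | p <- l]) = (2 * size l)%N.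
  by elim=> [//|x l IHl]; rewrite /= IHl mulnS.
by rewrite IH expnS.
Qed.

Definition Sn n := \sum_(1 <= k < n.+1) a k.

Lemma len_I n p : p \in I n -> p.2 - p.1 = (1 - Sn n) / 2 ^+ n.
Proof.
elim: n p => [|n IH] p.
  by rewrite inE => /eqP -> /=; rewrite /Sn big_geq // expr0 subr0 divr1; ring.
move=> /mem_IS [q /IH hq]; rewrite /child !inE => /orP[] /eqP -> /=;
have e : Sn n.+1 = Sn n + a n.+1 by rewrite /Sn big_nat_recr.
- have h2 : (2 : R) ^+ n != 0 by rewrite expf_neq0.
  have -> : q.2 = q.1 + (1 - Sn n) / 2 ^+ n by rewrite -hq; ring.
  by rewrite e exprS; field.
- have h2 : (2 : R) ^+ n != 0 by rewrite expf_neq0.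
  have -> : q.2 = q.1 + (1 - Sn n) / 2 ^+ n by rewrite -hq; ring.
  by rewrite e exprS; field.
Qed.

Hypothesis apos : forall k, 0 <= a k.

Lemma step_mono n : cantor_step a n.+1 `<=` cantor_step a n.
Proof.
move=> x [q /mem_IS [p pI qc] hx]; exists p => //.
have g0 : 0 <= a n.+1 / 2 ^+ n by rewrite divr_ge0 // exprn_ge0.
move: qc hx; rewrite /child !inE => /orP[] /eqP -> /= /andP[h1 h2];
  apply/andP; split; lra.
Qed.

Lemma step_mono_add n k : cantor_step a (n + k) `<=` cantor_step a n.
Proof.
elim: k => [|k IH]; first by rewrite addn0.
by rewrite addnS; apply: subset_trans IH; apply: step_mono.
Qed.

Lemma first_child m p j : p \in I m -> exists2 q, q \in I (m + j) & q.1 = p.1.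
Proof.
move=> pI; elim: j => [|j [q qI e]]; first by exists p; rewrite ?addn0.
exists (child (m + j) q)`_0; last by [].
rewrite addnS I_S; apply/flatten_mapP; exists q => //.
by rewrite /child inE eqxx.
Qed.

Hypothesis Sle1 : forall n, Sn n <= 1.

Lemma I_ordered n p : p \in I n -> p.1 <= p.2.
Proof.
move=> /len_I h; rewrite -subr_ge0 h divr_ge0 ?exprn_ge0 //.
by rewrite subr_ge0.
Qed.

Lemma left_in_K m p : p \in I m -> cantor_set a p.1.
Proof.
move=> pI n _; case: (leqP m n) => mn.
  have [q qI e] := @first_child m p (n - m) pI.
  rewrite subnKC in qI => //.
  exists q => //; rewrite -e lexx /=; exact: I_ordered qI.
have := @step_mono_add n (m - n); rewrite subnKC; last exact: ltnW.
apply; exists p => //; rewrite lexx /=; exact: I_ordered pI.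
Qed.


Definition gap n (p : R * R) : set R :=
  `](p.1 + p.2) / 2 - a n.+1 / 2 ^+ n / 2, (p.1 + p.2) / 2 + a n.+1 / 2 ^+ n / 2[.

Definition gaps n : set R := \big[setU/set0]_(p <- I n) gap n p.
Definition GG n : set R := \big[setU/set0]_(0 <= k < n) gaps k.

Lemma in_bigU (J : eqType) (l : seq J) (F : J -> set R) x :
  (\big[setU/set0]_(i <- l) F i) x <-> exists2 i, i \in l & F i x.
Proof.
elim: l => [|i l IH]; first by rewrite big_nil; split; [case | case].
rewrite big_cons; split.
  case=> [h|/IH [j jl hj]]; first by exists i; rewrite ?inE ?eqxx.
  by exists j; rewrite // inE jl orbT.
case=> j; rewrite inE => /orP[/eqP ->|jl] hj; [by left|by right; apply/IH; exists j].
Qed.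

Lemma step_cover n : cantor_step a n `<=` cantor_step a n.+1 `|` gaps n.
Proof.
move=> x [p pI /andP[h1 h2]].
set c := (p.1 + p.2) / 2; set g := a n.+1 / 2 ^+ n.
have inS : forall q, q \in child n p -> q \in I n.+1.
  by move=> q qc; rewrite I_S; apply/flatten_mapP; exists p.
case: (leP x (c - g / 2)) => hl.
  left; exists (p.1, c - g / 2); first by apply: inS; rewrite /child inE eqxx.
  by rewrite /= h1 hl.
case: (leP (c + g / 2) x) => hr.
  left; exists (c + g / 2, p.2); first by apply: inS; rewrite /child !inE eqxx orbT.
  by rewrite /= h2 hr.
right; rewrite /gaps in_bigU; exists p => //.
by rewrite /gap /= in_itv /=; apply/andP; split.
Qed.

Lemma cover n : `[0, 1] `<=` cantor_step a n `|` GG n.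
Proof.
elim: n => [|n IH] x hx.
  left; exists (0, 1); first by rewrite inE.
  by move: hx; rewrite /= in_itv.
rewrite /GG big_nat_recr //=.
case: (IH x hx) => [/step_cover [h|h]|h]; [by left|by right; right|by right; left].
Qed.

End Cantor.

Section Meas.
Variable R : realType.
Local Notation mu := (@lebesgue_measure R).

Lemma mu_bigU (J : Type) (l : seq J) (F : J -> set R) :
  (forall i, measurable (F i)) ->
  (mu (\big[setU/set0]_(i <- l) F i) <= \sum_(i <- l) mu (F i))%E.
Proof.
move=> mF; elim: l => [|i l IH]; first by rewrite !big_nil measure0.
rewrite !big_cons.
apply: le_trans (measureU2 mu (mF i) (bigsetU_measurable l (fun j _ => mF j))) _.
exact: leeD.
Qed.

Lemma mu_itv (x y : R) : x <= y -> mu `]x, y[ = (y - x)%:E.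
Proof.
move=> xy; rewrite lebesgue_measure_itv /= lte_fin.
case: (ltP x y) => [_|yx]; first by rewrite EFinB.
have -> : y = x by apply/eqP; rewrite eq_le yx xy.
by rewrite subrr.
Qed.

Lemma sum_const_seq (J : Type) (l : seq J) (c : R) :
  \sum_(i <- l) c = c *+ size l.
Proof. by elim: l => [|i l IH]; rewrite ?big_nil ?big_cons ?IH ?mulrS. Qed.

Variable a : nat -> R.
Hypothesis apos : forall k, 0 <= a k.

Lemma mu_gaps n : (mu (gaps a n) <= (a n.+1)%:E)%E.
Proof.
rewrite /gaps; apply: le_trans (mu_bigU _ (F := gap a n) (fun p => measurable_itv _)) _.
have g0 : 0 <= a n.+1 / 2 ^+ n / 2 by rewrite !divr_ge0 ?exprn_ge0.
rewrite (eq_bigr (fun _ => (a n.+1 / 2 ^+ n)%:E)); last first.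
  move=> p _; rewrite /gap mu_itv; last by lra.
  by congr EFin; field.
rewrite sumEFin sum_const_seq size_I lee_fin -[_ *+ (2 ^ n)%N]mulr_natr natrX mulfVK //.
Qed.

Lemma mu_GG n : (mu (GG a n) <= (Sn a n)%:E)%E.
Proof.
rewrite /GG; apply: le_trans (mu_bigU _ (F := gaps a) (fun k => bigsetU_measurable _ (fun p _ => measurable_itv _))) _.
apply: le_trans (_ : \sum_(0 <= k < n) (a k.+1)%:E <= _)%E.
  by apply: lee_sum => k _; apply: mu_gaps.
by rewrite sumEFin lee_fin /Sn big_add1 /=.
Qed.

Lemma nbhd_open (K : set R) t : open (nbhd_set K t).
Proof.
have -> : nbhd_set K t = \bigcup_(y in K) `]y - t, y + t[%classic.
  apply/seteqP; split => x.
    by case=> y Ky h; exists y => //=; rewrite in_itv /= -ltr_distlC distrC.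
  by case=> y Ky; rewrite /= in_itv /= -ltr_distlC distrC => h; exists y.
by apply: bigcup_open => y _; apply: itv_open.
Qed.

Hypothesis Sle1 : forall n, Sn a n <= 1.

Lemma K_nbhd_lb m t : (2 ^+ m)^-1 < t ->
  ((1 - Sn a m)%:E <= mu (nbhd_set (cantor_set a) t))%E.
Proof.
move=> mt.
have Sge0 : 0 <= Sn a m by rewrite /Sn big_nat sumr_ge0.
have sub : `[0, 1] `<=` nbhd_set (cantor_set a) t `|` GG a m.
  move=> x /(cover a m) [[p pI /andP[h1 h2]]|h]; last by right.
  left; exists p.1; first exact: (left_in_K apos Sle1 pI).
  have := len_I pI.
  have : (1 - Sn a m) / 2 ^+ m <= (2 ^+ m)^-1.
    by rewrite ler_pdivrMr ?exprn_gt0 // mulVf ?expf_neq0 //; lra.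
  move=> h3 h4; rewrite ger0_norm; lra.
have mN : measurable (nbhd_set (cantor_set a) t).
  by apply: measurable_realfun.open_measurable; apply: nbhd_open.
have mG : measurable (GG a m).
  by apply: bigsetU_measurable => k _; apply: bigsetU_measurable => p _; exact: measurable_itv.
have h : (mu `[0%R, 1%R]%classic <= mu (nbhd_set (cantor_set a) t `|` GG a m))%E.
  by apply: le_measure => //; rewrite inE //; apply: measurableU.
have e01 : mu `[0%R, 1%R]%classic = 1%E.
  by rewrite lebesgue_measure_itv /= lte_fin ltr01 -EFinB subr0.
rewrite e01 in h.
rewrite EFinB leeBlDr //; apply: le_trans h _.
apply: le_trans (measureU2 mu mN mG) _.
by apply: leeD => //; apply: mu_GG.
Qed.

Lemma K_nbhd_ub m t : 0 < t ->
  (mu (nbhd_set (cantor_set a) t) <= (1 - Sn a m + 2 ^+ m * (2 * t))%:E)%E.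
Proof.
move=> t0.
have sub : nbhd_set (cantor_set a) t `<=`
    \big[setU/set0]_(p <- cantor_intervals a m) `]p.1 - t, p.2 + t[%classic.
  move=> x [y Ky]; rewrite distrC ltr_distlC => /andP[h1 h2].
  have [p pI /andP[h3 h4]] := Ky m Logic.I.
  apply/in_bigU; exists p => //; rewrite /= in_itv /=; apply/andP; split; lra.
have mN : measurable (nbhd_set (cantor_set a) t) by apply: measurable_realfun.open_measurable; apply: nbhd_open.
have mU : measurable (\big[setU/set0]_(p <- cantor_intervals a m) `]p.1 - t, p.2 + t[%classic).
  by apply: bigsetU_measurable => p _; exact: measurable_itv.
apply: le_trans (le_measure mu _ _ sub) _; rewrite ?inE //.
apply: le_trans (mu_bigU _ (F := fun p => `]p.1 - t, p.2 + t[%classic) (fun p => measurable_itv _)) _.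
rewrite big_seq.
rewrite (eq_bigr (fun _ => ((1 - Sn a m) / 2 ^+ m + 2 * t)%:E)); last first.
  move=> p pI; have h := len_I pI; have h2 := I_ordered Sle1 pI.
  rewrite mu_itv; last by lra.
  by congr EFin; rewrite -h; ring.
rewrite -big_seq sumEFin sum_const_seq size_I lee_fin -[_ *+ (2 ^ m)%N]mulr_natr natrX.
have h2 : (2 : R) ^+ m != 0 by rewrite expf_neq0.
by rewrite mulrDl mulfVK // mulrC.
Qed.

End Meas.

Unset Implicit Arguments.

Section Glue.
Variable R : realType.

Lemma e_lt4 : expR (1 : R) < 4.
Proof.
have hne : (- 2^-1 : R) != 0 by rewrite oppr_eq0 invr_eq0.
have h := expR_gt1Dx hne.
have e : expR (1 : R) = (expR (- 2^-1))^-1 * (expR (- 2^-1))^-1.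
  by rewrite -!expRN -expRD opprK; congr expR; field.
rewrite e; have h0 : 0 < expR (- 2^-1 : R) by apply: expR_gt0.
have h1 : (expR (- 2^-1 : R))^-1 < 2.
  have hc : (2 : R) * 2^-1 = 1 by rewrite mulfV.
  rewrite -[_^-1]mul1r ltr_pdivrMr //; lra.
have h2 : 0 < (expR (- 2^-1 : R))^-1 by rewrite invr_gt0.
nra.
Qed.

Lemma two_le_e : 2 <= expR (1 : R).
Proof. by have := @expR_ge1Dx R 1. Qed.

Lemma lower_m (L : R) (N : nat) : L < N.+1%:R ->
  (2 ^+ (2 * N.+1))^-1 < expR (- L).
Proof.
move=> LN; rewrite expRN exprM ltf_pV2 ?posrE ?expR_gt0 ?exprn_gt0 //.
apply: lt_trans (_ : expR (N.+1%:R) < _); first by rewrite ltr_expR.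
rewrite -[N.+1%:R]mulr1 expRM_natl.
rewrite ltrXn2r ?expR_ge0 //; have := e_lt4; lra.
Qed.

Lemma upper_pow (L : R) (m : nat) : m%:R <= L / 2 ->
  2 ^+ m * (2 * expR (- L)) <= 2 * expR (- (L / 2)).
Proof.
move=> mL.
have h : (2 : R) ^+ m <= expR (L / 2).
  apply: le_trans (_ : expR 1 ^+ m <= _).
    by rewrite lerXn2r ?nnegrE ?expR_ge0 // two_le_e.
  by rewrite -expRM_natl mulr1 ler_expR.
have e : expR (- (L / 2)) = expR (L / 2) * expR (- L).
  by rewrite -expRD; congr expR; field.
rewrite e; have := expR_gt0 (- L); nra.
Qed.

End Glue.

Lemma sq1 (R : realType) (L N : R) : 5 <= L -> N <= L -> 2 * N + 3 <= (1 + L) * (1 + L).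
Proof. move=> h1 h2; nra. Qed.

Lemma sq2 (R : realType) (L M : R) : 5 <= L -> L / 2 < M -> 1 + L <= M * M.
Proof.
move=> h1 h2; have h3 : L < 2 * M by rewrite -ltr_pdivrMl //; rewrite mulrC.
nra.
Qed.

Lemma ln_sq (R : realType) {x : R} : 0 < x -> 2 * ln x = ln (x * x).
Proof. by move=> x0; rewrite lnM ?posrE //; ring. Qed.

Lemma em_nat (R : realType) (N : nat) : ((2 * N.+1).+1%:R : R) = 2 * N%:R + 3.
Proof. by rewrite -natr1 natrM -natr1; ring. Qed.

Section Final.
Variable R : realType.
Variable s : R.
Hypothesis hs : 1 < s.

Lemma eta_gt0 : 0 < eta_s s.
Proof.
apply: lt_le_trans (PP_le_eta R s hs 2).
rewrite /PP big_nat1 /bk /bb divr_gt0 // mulr_gt0 // powR_gt0 //.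
by apply: ln_gt0; rewrite (ltr_nat R 1 2).
Qed.

Lemma Sn_eq n : Sn (a_seq s) n = PP R s n.+1 / eta_s s.
Proof.
rewrite /Sn /PP mulr_suml; apply: eq_bigr => k _.
by rewrite /a_seq /bk /bb mul1r mulrC.
Qed.

Lemma apos : forall k, 0 <= a_seq s k.
Proof.
move=> k; rewrite /a_seq mul1r mulr_ge0 //; first by rewrite invr_ge0 ltW // eta_gt0.
exact: (bk_ge0 R s k).
Qed.

Lemma Sle1 : forall n, Sn (a_seq s) n <= 1.
Proof.
move=> n; rewrite Sn_eq ler_pdivrMr ?eta_gt0 // mul1r; exact: (PP_le_eta R s hs).
Qed.

Lemma one_minus_Sn n : 1 - Sn (a_seq s) n = (eta_s s - PP R s n.+1) / eta_s s.
Proof.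
rewrite Sn_eq; have := eta_gt0; move=> h; field; lra.
Qed.


Lemma main_s :
  exists c1 c2 b t0 : R,
    0 < c1 /\ 0 < c2 /\ 0 < b /\ 0 < t0 /\
    (forall t : R, 0 < t <= t0 -> 0 < ln (ln (b / t))) /\
    (forall t : R, 0 < t <= t0 ->
       ((c1 * (ln (ln (b / t))) `^ (1 - s))%:E
          <= (@lebesgue_measure R) (nbhd_set (cantor_set (a_seq s)) t))%E /\
       ((@lebesgue_measure R) (nbhd_set (cantor_set (a_seq s)) t)
          <= (c2 * (ln (ln (b / t))) `^ (1 - s))%:E)%E).
Proof.
have p0 : 0 < s - 1 by rewrite subr_gt0.
have eta0 := eta_gt0.
have t2 : 1 < 2 `^ (s - 1) :> R := two_pow_gt1 R s hs.
have k0 : 0 < kap R s := kap_gt0 R s hs.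
have hL : forall t : R, 0 < t <= expR (-5) -> 5 <= - ln t.
  move=> t /andP[t0 tt0]; rewrite lerNr.
  by rewrite -[X in _ <= X](expRK (-5)) ler_ln ?posrE ?expR_gt0.
have hln : forall t : R, 0 < t -> ln (expR 1 / t) = 1 + - ln t.
  by move=> t t0; rewrite ln_div ?posrE ?expR_gt0 // expRK.
exists (kap R s / eta_s s / 2 `^ (s - 1)),
  (2 `^ (s - 1) / ((s - 1) * eta_s s) + 2 * expR ((s - 1) * ln (2 * (s - 1)))),
  (expR 1), (expR (-5)).
split; first by apply: divr_gt0; [apply: divr_gt0|]; lra.
split; first by rewrite addr_gt0 ?divr_gt0 ?mulr_gt0 ?expR_gt0 //; lra.
split; first exact: expR_gt0.
split; first exact: expR_gt0.
split.
  move=> t /[dup] ht /andP[t0 _]; rewrite hln // ln_gt0 //.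
  have := hL t ht; lra.
move=> t /[dup] ht /andP[t0 _].
have L5 := hL t ht.
rewrite hln //.
set L := - ln t in L5 *.
have tE : t = expR (- L) by rewrite /L opprK lnK ?posrE.
set Lam := ln (1 + L).
have Lam0 : 0 < Lam by rewrite /Lam ln_gt0 //; lra.
have -> : 1 - s = - (s - 1) by ring.
rewrite powRN.
set Q := Lam `^ (s - 1).
have Q0 : 0 < Q by rewrite /Q powR_gt0.
split.
-
  set N := Num.trunc L.
  have hN : N%:R <= L by rewrite truncn_le; lra.
  have hN1 : L < N.+1%:R by apply: truncnS_gt.
  clearbody N.
  set m := (2 * N.+1)%N.
  have hmt : (2 ^+ m)^-1 < t by rewrite tE; apply: lower_m.
  apply: le_trans (K_nbhd_lb apos Sle1 hmt); clear hmt.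
  rewrite lee_fin one_minus_Sn.
  have m1 : (1 <= m)%N by rewrite /m muln_gt0.
  have hk := eta_tail_lb R s hs m m1.
  have hm : ln (m.+1%:R : R) <= 2 * Lam.
    have L10 : 0 < 1 + L by lra.
    rewrite /Lam (@ln_sq R _ L10).
    have em : (m.+1%:R : R) = 2 * N%:R + 3 by apply: em_nat.
    rewrite ler_ln ?posrE ?mulr_gt0 ?em //; try lra; apply: sq1 => //.
  have hphi : (2 `^ (s - 1) * Q)^-1 <= phi R s m.+1%:R.
    rewrite /phi lef_pV2 ?posrE ?mulr_gt0 ?powR_gt0 //; last first.
      by apply: ln_gt0; rewrite (ltr_nat R 1).
    rewrite /Q -powRM; last by lra.
      apply: ge0_ler_powR; rewrite ?nnegrE; try lra.
      by apply: ln_ge0; rewrite (ler_nat R 1).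
    by [].
  rewrite ler_pdivlMr //.
  apply: le_trans hk.
  have -> : kap R s / eta_s s / 2 `^ (s - 1) * Q^-1 * eta_s s
      = kap R s * (2 `^ (s - 1) * Q)^-1.
    by field; apply/and3P; split; apply/negP => /eqP h; lra.
  by rewrite ler_pM2l.
-
  set M := Num.trunc (L / 2).
  have hM : M%:R <= L / 2 by rewrite truncn_le; lra.
  have hM1 : L / 2 < M.+1%:R by apply: truncnS_gt.
  have M1 : (1 <= M)%N by rewrite truncn_gt0; lra.
  clearbody M.
  apply: le_trans (K_nbhd_ub Sle1 M t0) _.
  rewrite lee_fin one_minus_Sn.
  have hk := eta_tail_ub R s hs M M1.
  have hM2 : Lam <= 2 * ln (M.+1%:R : R).
    rewrite (@ln_sq R _ (ltr0Sn R M)).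
    rewrite /Lam ler_ln ?posrE ?mulr_gt0 ?ltr0Sn //; try lra.
    exact: sq2.
  have hphi : phi R s M.+1%:R <= 2 `^ (s - 1) / Q.
    have lM0 : 0 < ln (M.+1%:R : R) by apply: ln_gt0; rewrite (ltr_nat R 1) ltnS.
    rewrite /phi -[X in _ <= X]invrK lef_pV2 ?posrE ?invr_gt0 ?divr_gt0 ?powR_gt0 //; try lra.
    rewrite invf_div ler_pdivrMr ?powR_gt0 //; try lra.
    rewrite -powRM; try lra.
    apply: ge0_ler_powR; rewrite ?nnegrE; lra.
  have hpow := upper_pow R L M hM; rewrite -tE in hpow.
  have hQ : Q * expR (- (L / 2)) <= expR ((s - 1) * ln (2 * (s - 1))).
    rewrite /Q powR_pos // -expRD ler_expR.
    have hl1 : Lam <= L by rewrite /Lam; apply: le_ln1Dx; lra.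
    have hl2 : ln Lam <= ln L by rewrite ler_ln ?posrE //; lra.
    have hl3 : ln L = ln (2 * (s - 1)) + ln (L / (2 * (s - 1))).
      rewrite -lnM ?posrE ?divr_gt0 ?mulr_gt0 //; try lra.
      by congr ln; field; lra.
    have hl4 : ln (L / (2 * (s - 1))) <= L / (2 * (s - 1)) - 1.
      by apply: ln_le_sub1; rewrite divr_gt0 ?mulr_gt0 //; lra.
    have hl5 : (s - 1) * (L / (2 * (s - 1))) = L / 2 by field; lra.
    have : (s - 1) * ln Lam <= (s - 1) * ln (2 * (s - 1)) + (s - 1) * (L / (2 * (s - 1))).
      rewrite -mulrDr ler_pM2l //; lra.
    lra.
  have e1 : (eta_s s - PP R s M.+1) / eta_s s <= 2 `^ (s - 1) / ((s - 1) * eta_s s) * Q^-1.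
    rewrite ler_pdivrMr //; apply: le_trans hk _.
    rewrite ler_pdivrMr //.
    have -> : 2 `^ (s - 1) / ((s - 1) * eta_s s) * Q^-1 * eta_s s * (s - 1) = 2 `^ (s - 1) / Q.
      by field; apply/and3P; split; apply/negP => /eqP h; lra.
    by [].
  have e2 : 2 ^+ M * (2 * t) <= 2 * expR ((s - 1) * ln (2 * (s - 1))) * Q^-1.
    apply: le_trans hpow _.
    rewrite -mulrA ler_pM2l // ler_pdivlMr //.
    by rewrite mulrC.
  rewrite mulrDl; lra.
Qed.

End Final.

Theorem lemma4p5 (R : realType) (s : R) (hs : 1 < s) :
  exists c1 c2 b t0 : R,
    0 < c1 /\ 0 < c2 /\ 0 < b /\ 0 < t0 /\
    (forall t : R, 0 < t <= t0 -> 0 < ln (ln (b / t))) /\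
    (forall t : R, 0 < t <= t0 ->
       ((c1 * (ln (ln (b / t))) `^ (1 - s))%:E
          <= (@lebesgue_measure R) (nbhd_set (cantor_set (a_seq s)) t))%E /\
       ((@lebesgue_measure R) (nbhd_set (cantor_set (a_seq s)) t)
          <= (c2 * (ln (ln (b / t))) `^ (1 - s))%:E)%E).
Proof. exact: main_s. Qed.
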